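(* Under the standing assumptions of the context, the trigonometric polynomial $u_{0,l}:=u_l/u_l(0)$ is a pure mask: it has no pair of symmetric zeros and no cycle (including the trivial cycle $\{1\}$).
   Context: Let $\theta$ be odd, non-decreasing, $C^2$, with $\theta(\omega)=\pi/4$ for $\omega>\pi/3$; fix $\pi/3\le\omega_0<\pi/2$. Meyer scaling function (Fourier transform): $\widehat{\varphi^M}(\omega)=1$ for $|\omega|\le2\omega_0$, $=\cos(\frac\pi4+\theta(\frac{\pi}{3(\pi-2\omega_0)}(|\omega|-\pi)))$ for $2\omega_0<|\omega|\le2\pi-2\omega_0$, $=0$ otherwise. Meyer mask: $2\pi$-periodic $m^M$ with $m^M(\omega)=\widehat{\varphi^M}(2\omega)$ on $[-\pi,\pi]$. $\|\cdot\|_C$: sup norm on $[-\pi,\pi]$. A linear method of summation $(\lambda_{n,k})$ maps $f$ with Fourier coefficients $a_k,b_k$ to $u_n(f,\omega)=\frac{a_0}2+\sum_{k=1}^n\lambda_{n,k}(a_k\cos k\omega+b_k\sin k\omega)$. $m^M_l:=m^M/(\cos\frac\omega2)^{2l}$. Standing assumptions: a method and a sequence $n(l)$ are fixed with $u_l:=u_{n(l)}(m^M_l,\cdot)$, $u_{1,l}:=u_{n(l)}((m^M_l)',\cdot)$ satisfying $\|u_l-m^M_l\|_C=o(l^{-1})$, $\|u_{1,l}-(m^M_l)'\|_C=o(1)$, $u_l(\pi)\ne0$; $l_0$ is fixed with $\inf_{l\ge l_0}|u_l(0)|>0$ and $l\ge l_0$. For a $2\pi$-periodic mask $m$: $\pm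 e^{i\bar\omega}$ is a pair of symmetric roots if $m(\bar\omega)=m(\bar\omega+\pi)=0$; a set $\{b_1,\dots,b_n\}$ of distinct complex numbers is cyclic if $b_{j+1}=b_j^2$ for $j=1,\dots,n$ with $b_{n+1}=b_1$; a cyclic set is a cycle of $m$ if $m(\omega+\pi)=0$ whenever $e^{i\omega}=b_j$ for some $j$; the trivial cycle is $\{1\}$; $m$ is pure if it has neither pairs of symmetric zeros nor cycles. *)

(* Defs.v *)
From Stdlib Require Import Reals Lra.
From Coquelicot Require Import Coquelicot.
Open Scope R_scope.

(* Meyer scaling function (Fourier transform), depending on theta and omega0. *)
Definition phiM (theta : R -> R) (w0 : R) (w : R) : R :=
  if Rle_dec (Rabs w) (2 * w0) then 1
  else if Rle_dec (Rabs w) (2 * PI - 2 * w0) then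
    cos (PI / 4 + theta (PI / (3 * (PI - 2 * w0)) * (Rabs w - PI)))
  else 0.

(* reduction of w modulo 2*PI into [-PI, PI) :  w - 2 PI floor((w+PI)/(2PI)) ;
   for real x, (up x - 1) is the floor of x *)
Definition red2pi (w : R) : R :=
  w - 2 * PI * IZR (up ((w + PI) / (2 * PI)) - 1).

(* Meyer mask: 2pi-periodic, equal to phiM(2w) on [-pi,pi]
   (consistent at the endpoints since phiM is even). *)
Definition mM (theta : R -> R) (w0 : R) (w : R) : R :=
  phiM theta w0 (2 * red2pi w).

(* m^M_l = m^M / (cos (w/2))^(2l)  (m^M vanishes near the zeros of cos(w/2)). *)
Definition mMl (theta : R -> R) (w0 : R) (l : nat) (w : R) : R :=
  mM theta w0 w / (cos (w / 2)) ^ (2 * l).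

Definition fa (f : R -> R) (k : nat) : R :=
  / PI * RInt (fun x => f x * cos (INR k * x)) (- PI) PI.
Definition fb (f : R -> R) (k : nat) : R :=
  / PI * RInt (fun x => f x * sin (INR k * x)) (- PI) PI.

Definition usum (lam : nat -> nat -> R) (n : nat) (f : R -> R) (w : R) : R :=
  fa f 0 / 2 +
  sum_n_m (fun k => lam n k * (fa f k * cos (INR k * w) + fb f k * sin (INR k * w)))
    1 n.

Definition cis (w : R) : C := (cos w, sin w).

(* pair of symmetric roots +- e^{i wb} of a mask m *)
Definition sym_root_pair (m : R -> R) (wb : R) : Prop :=
  m wb = 0 /\ m (wb + PI) = 0.

Definition cyclic_set (n : nat) (b : nat -> C) : Prop :=
  (1 <= n)%nat /\
  (forall i j, (i < n)%nat -> (j < n)%nat -> b i = b j -> i = j) /\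
  (forall j, (j < n)%nat -> b ((j + 1) mod n)%nat = (b j * b j)%C).

Definition cycle_of (m : R -> R) (n : nat) (b : nat -> C) : Prop :=
  cyclic_set n b /\
  (forall j, (j < n)%nat ->
     Cmod (b j) = 1 /\ (forall w, cis w = b j -> m (w + PI) = 0)).

Definition pure_mask (m : R -> R) : Prop :=
  (~ exists wb, sym_root_pair m wb) /\ (~ exists n b, cycle_of m n b).

(* Main.v *)
Require Import Defs.
From Stdlib Require Import Reals Lra Lia Psatz ZArith.
From Coquelicot Require Import Coquelicot.
Open Scope R_scope.

Lemma cos_perZ x k : cos (x + 2*IZR k*PI) = cos x.
Proof.
destruct (Z_le_gt_dec 0%Z k) as [h|h].
- rewrite <- (Z2Nat.id k) by lia. rewrite <- INR_IZR_INZ. apply cos_period.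
- set (y := x + 2*IZR k*PI).
  replace x with (y + 2*INR (Z.to_nat (-k))*PI).
  + symmetry; apply cos_period.
  + unfold y; rewrite INR_IZR_INZ, Z2Nat.id by lia; rewrite opp_IZR; ring.
Qed.

Lemma sin_perZ x k : sin (x + 2*IZR k*PI) = sin x.
Proof.
destruct (Z_le_gt_dec 0%Z k) as [h|h].
- rewrite <- (Z2Nat.id k) by lia. rewrite <- INR_IZR_INZ. apply sin_period.
- set (y := x + 2*IZR k*PI).
  replace x with (y + 2*INR (Z.to_nat (-k))*PI).
  + symmetry; apply sin_period.
  + unfold y; rewrite INR_IZR_INZ, Z2Nat.id by lia; rewrite opp_IZR; ring.
Qed.

Lemma usum_per lam n f w k : usum lam n f (w + 2*IZR k*PI) = usum lam n f w.
Proof.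
unfold usum. f_equal. apply sum_n_m_ext. intro j.
replace (INR j * (w + 2*IZR k*PI)) with (INR j*w + 2*IZR (Z.of_nat j * k)*PI)
  by (rewrite mult_IZR, <- INR_IZR_INZ; ring).
rewrite cos_perZ, sin_perZ. reflexivity.
Qed.

Lemma reduce v : exists w k, -PI <= w <= PI /\ v = w + 2*IZR k*PI.
Proof.
set (x := (v+PI)/(2*PI)).
destruct (archimed x) as [H1 H2].
exists (v - 2*IZR (up x)*PI + 2*PI), (up x - 1)%Z.
assert (HP := PI_RGT_0).
assert (hv : v = 2*PI*x - PI) by (unfold x; field; lra).
rewrite minus_IZR. split; [|ring].
rewrite hv. split; nra.
Qed.

Lemma red_id w : -(PI/2) <= w <= PI/2 -> red2pi w = w.
Proof.
intro Hw. assert (HP := PI_RGT_0). unfold red2pi.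
set (t := (w+PI)/(2*PI)).
assert (ht : t*(2*PI) = w+PI) by (unfold t; field; lra).
assert (up t = 1%Z) as ->.
{ symmetry; apply tech_up; nra. }
change (IZR (1-1)) with 0. ring.
Qed.

Section S.
Variables (theta : R -> R) (w0 : R).
Hypothesis (Hodd : forall x, theta (- x) = - theta x)
  (Hmono : forall x y, x <= y -> theta x <= theta y)
  (Hconst : forall x, PI / 3 < x -> theta x = PI / 4)
  (Hw0 : PI / 3 <= w0 < PI / 2).

Lemma phi_low x : Rabs x <= PI -> cos (PI/4) <= phiM theta w0 x.
Proof.
intro Hx. assert (HP := PI_RGT_0). assert (HP4 := PI_4).
unfold phiM. destruct (Rle_dec (Rabs x) (2*w0)).
- apply COS_bound.
- destruct (Rle_dec (Rabs x) (2 * PI - 2 * w0)).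
  + set (s := PI / (3 * (PI - 2 * w0)) * (Rabs x - PI)).
    assert (hc : 0 < PI / (3 * (PI - 2 * w0))) by (apply Rdiv_lt_0_compat; lra).
    assert (hs : s <= 0) by (unfold s; nra).
    assert (t0 : theta 0 = 0) by (pose proof (Hodd 0); rewrite Ropp_0 in H; lra).
    assert (ts1 : theta s <= 0) by (rewrite <- t0; apply Hmono; lra).
    assert (ts2 : theta (- s) <= PI/4).
    { rewrite <- (Hconst (Rmax (-s) 2)). apply Hmono, Rmax_l.
      pose proof (Rmax_r (-s) 2). lra. }
    rewrite <- (Ropp_involutive s) in ts1 |- *. rewrite Hodd in ts1 |- *.
    apply cos_decr_1; lra.
  + exfalso. lra.
Qed.

Lemma mMl_low l w : -(PI/2) <= w <= PI/2 -> cos (PI/4) <= mMl theta w0 l w.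
Proof.
intro Hw. assert (HP := PI_RGT_0).
unfold mMl, mM. rewrite red_id by auto.
assert (h := phi_low (2*w) ltac:(apply Rabs_le; lra)).
assert (hc4 : 0 < cos (PI/4)) by (apply cos_gt_0; lra).
set (c := cos (w/2)).
assert (hc : 0 < c) by (apply cos_gt_0; lra).
assert (hc1 : c <= 1) by apply COS_bound.
assert (hp : 0 < c ^ (2*l)) by (apply pow_lt; auto).
assert (hp1 : c ^ (2*l) <= 1) by (rewrite <- (pow1 (2*l)); apply pow_incr; lra).
assert (hi : 1 <= / c ^ (2*l)) by (rewrite <- Rinv_1; apply Rinv_le_contravar; auto).
unfold Rdiv. nra.
Qed.

Lemma zero_neg lam n l :
  1 <= INR l ->
  (forall w, -PI <= w <= PI ->
     INR l * Rabs (usum lam n (mMl theta w0 l) w - mMl theta w0 l w) <= cos (PI/4)/2) ->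
  forall v, usum lam n (mMl theta w0 l) v = 0 -> cos v < 0.
Proof.
intros Hl Happ v Hv. assert (HP := PI_RGT_0).
destruct (reduce v) as [w [k [Hw ->]]].
rewrite usum_per in Hv. rewrite cos_perZ.
destruct (Rlt_or_le (cos w) 0) as [h|h]; auto. exfalso.
assert (Hw2 : -(PI/2) <= w <= PI/2).
{ destruct (Rle_dec w (PI/2)) as [a|a].
  - destruct (Rle_dec (-(PI/2)) w) as [b|b]; [lra|].
    rewrite <- cos_neg in h. pose proof (cos_lt_0 (-w)). lra.
  - pose proof (cos_lt_0 w). lra. }
pose proof (mMl_low l w Hw2).
assert (hc4 : 0 < cos (PI/4)) by (apply cos_gt_0; lra).
specialize (Happ w Hw).
pose proof (Rabs_pos (usum lam n (mMl theta w0 l) w - mMl theta w0 l w)).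
pose proof (Rle_abs (mMl theta w0 l w - usum lam n (mMl theta w0 l) w)).
rewrite Rabs_minus_sym in H1. nra.
Qed.

End S.

Lemma angle a c : a*a + c*c = 1 -> exists w, cos w = a /\ sin w = c.
Proof.
intro H. assert (ha : -1 <= a <= 1) by nra.
replace (1 - a²) with (Rsqr c) by (unfold Rsqr; lra).
destruct (Rle_lt_dec 0 c) as [h|h].
- exists (acos a). rewrite cos_acos, sin_acos by auto.
  replace (1 - a²) with (Rsqr c) by (unfold Rsqr; lra).
  rewrite sqrt_Rsqr by auto. auto.
- exists (- acos a). rewrite cos_neg, sin_neg, cos_acos, sin_acos by auto.
  replace (1 - a²) with (Rsqr c) by (unfold Rsqr; lra).
  rewrite sqrt_Rsqr_abs, Rabs_left by auto. split; ring.
Qed.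

Lemma argmin (f : nat -> R) n : (1 <= n)%nat ->
  exists k, (k < n)%nat /\ forall j, (j < n)%nat -> f k <= f j.
Proof.
induction n as [|n IH]; intro Hn; [lia|].
destruct (Nat.eq_dec n 0) as [->|hn].
- exists 0%nat. split; [lia|]. intros j hj. replace j with 0%nat by lia. lra.
- destruct IH as [k [hk Hk]]; [lia|].
  destruct (Rle_lt_dec (f k) (f n)) as [a|a].
  + exists k. split; [lia|]. intros j hj.
    destruct (Nat.eq_dec j n) as [->|b]; auto. apply Hk; lia.
  + exists n. split; [lia|]. intros j hj.
    destruct (Nat.eq_dec j n) as [->|b]; [lra|]. specialize (Hk j ltac:(lia)). lra.
Qed.

Theorem lemma6
  (theta : R -> R) (w0 : R) (lam : nat -> nat -> R) (nn : nat -> nat) (l0 : nat)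
  (* theta odd, non-decreasing, C^2, = pi/4 beyond pi/3 *)
  (Hodd : forall x, theta (- x) = - theta x)
  (Hmono : forall x y, x <= y -> theta x <= theta y)
  (HC2 : forall x, ex_derive theta x /\ ex_derive (Derive theta) x /\
                   continuous (Derive (Derive theta)) x)
  (Hconst : forall x, PI / 3 < x -> theta x = PI / 4)
  (Hw0 : PI / 3 <= w0 < PI / 2)
  (* ||u_l - m^M_l||_C = o(1/l) *)
  (Happrox : forall eps, 0 < eps -> exists N, forall l, (N <= l)%nat ->
     forall w, - PI <= w <= PI ->
     INR l * Rabs (usum lam (nn l) (mMl theta w0 l) w - mMl theta w0 l w) <= eps)
  (* ||u_{1,l} - (m^M_l)'||_C = o(1) *)
  (Happrox1 : forall eps, 0 < eps -> exists N, forall l, (N <= l)%nat ->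
     forall w, - PI <= w <= PI ->
     Rabs (usum lam (nn l) (Derive (mMl theta w0 l)) w - Derive (mMl theta w0 l) w)
       <= eps)
  (Hpi : forall l, usum lam (nn l) (mMl theta w0 l) PI <> 0)
  (* inf_{l >= l0} |u_l(0)| > 0 *)
  (Hinf : exists c, 0 < c /\ forall l, (l0 <= l)%nat ->
     c <= Rabs (usum lam (nn l) (mMl theta w0 l) 0)) :
  exists L, forall l, (l0 <= l)%nat -> (L <= l)%nat ->
    pure_mask (fun w => usum lam (nn l) (mMl theta w0 l) w /
                        usum lam (nn l) (mMl theta w0 l) 0).
Proof.
assert (HP := PI_RGT_0).
assert (hc4 : 0 < cos (PI/4)) by (apply cos_gt_0; lra).
destruct (Happrox (cos (PI/4)/2)) as [N HN]; [lra|].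
exists (Nat.max N 1). intros l Hl0 HL.
assert (Hl1 : 1 <= INR l) by (apply (le_INR 1); lia).
assert (HZ := zero_neg theta w0 Hodd Hmono Hconst Hw0 lam (nn l) l Hl1
                (HN l ltac:(lia))).
set (u := usum lam (nn l) (mMl theta w0 l)) in *.
assert (Hu0 : u 0 <> 0) by (intro H; apply HZ in H; rewrite cos_0 in H; lra).
assert (mz : forall w, u w / u 0 = 0 -> u w = 0).
{ intros w H. unfold Rdiv in H. apply Rmult_integral in H. destruct H as [H|H]; auto.
  exfalso; apply (Rinv_neq_0_compat _ Hu0 H). }
split.
- intros [wb [H1 H2]]. apply mz, HZ in H1. apply mz, HZ in H2.
  rewrite neg_cos in H2. lra.
- intros [n [b [[Hn [Hinj Hsq]] Hc]]].
  assert (Hpos : forall j, (j < n)%nat ->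
            fst (b j) * fst (b j) + snd (b j) * snd (b j) = 1 /\ 0 < fst (b j)).
  { intros j hj. destruct (Hc j hj) as [Hm Hz].
    destruct (b j) as [a c]. simpl.
    unfold Cmod in Hm. cbn [fst snd] in Hm.
    assert (Hs : a*a + c*c = 1).
    { assert (h0 : 0 <= a^2 + c^2) by nra.
      pose proof (Rsqr_sqrt _ h0) as E. rewrite Hm in E. unfold Rsqr in E. nra. }
    split; auto.
    destruct (angle a c Hs) as [w [ew1 ew2]].
    assert (ec : cis w = (a,c)) by (unfold cis; rewrite ew1, ew2; reflexivity).
    specialize (Hz w ec). apply mz, HZ in Hz. rewrite neg_cos in Hz. lra. }
  destruct (argmin (fun j => fst (b j)) n Hn) as [k [hk Hk]].
  set (j' := ((k + 1) mod n)%nat).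
  assert (hj' : (j' < n)%nat) by (apply Nat.mod_upper_bound; lia).
  specialize (Hk j' hj'). simpl in Hk. unfold j' in Hk. rewrite (Hsq k hk) in Hk.
  destruct (Hpos k hk) as [E1 E2].
  destruct (Hc k hk) as [_ Hz].
  destruct (b k) as [a c]. simpl in Hk, E1, E2.
  assert (a = 1) by nra. subst a.
  assert (c = 0) by nra. subst c.
  assert (ec : cis 0 = (1,0)) by (unfold cis; rewrite cos_0, sin_0; reflexivity).
  specialize (Hz 0 ec). rewrite Rplus_0_l in Hz. apply mz in Hz. apply (Hpi l). exact Hz.
Qed.
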